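(* Let $P$ be a convex polygon with no two edges parallel, and let $e_s,e_t$ be edges with $e_s\preceq e_t$. Let $S$ be the set of pairs $(e_i,e_j)$ with $e_i\prec e_j$ and $e_i,e_j\in\{e_s,e_{s+1},\ldots,e_t\}$. Then every point $Z_i^j$ with $(e_i,e_j)\in S$ lies in $\rho=[v_{t+1}\circlearrowright v_s]$, and for $(e_i,e_j)\in S$ and $(e_{i'},e_{j'})\in S$: if $e_i\preceq e_{i'}$ and $e_j\preceq e_{j'}$, then $Z_i^j\le_\rho Z_{i'}^{j'}$.
   Context: $P$ is a compact convex polygon with boundary $\partial P$, edges $e_1,\ldots,e_n$ in clockwise order and vertices $v_1,\ldots,v_n$, $e_i$ the open segment from $v_i$ to $v_{i+1}$ (indices mod $n$); $e_s,e_{s+1},\ldots,e_t$ denotes the edges met going clockwise from $e_s$ to $e_t$. $\ell_i$ is the line containing $e_i$, $\mathsf{I}_{i,j}=\ell_i\cap\ell_j$. $\mathrm{disprod}_{l,l'}(X)=d_l(X)d_{l'}(X)$ where $d_l$ is distance to the line $l$. For distinct edges, $e_i\prec e_j$ means $\mathsf{I}_{i,j}=v_i+t(v_{i+1}-v_i)$ for some $t\ge1$ (equivalently the clockwise turning angle from direction $v_{i+1}-v_i$ to $v_{j+1}-v_j$ is in $(0,\pi)$); $e_i\preceq e_j$ means $e_i=e_j$ or $e_i\prec e_j$. For $e_i\prec e_j$, $Z_i^j$ is the unique point of $P$ maximizing $\mathrm{disprod}_{\ell_i,\ell_j}$ over $P$ (it lies on $\partial P$). $[X\circlearrowright X']$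 is the closed portion of $\partial P$ from $X$ clockwise to $X'$. For a boundary portion $\rho$ and $A,B\in\rho$, $A<_\rho B$ means $A$ is met before $B$ when traversing $\rho$ clockwise, and $A\le_\rho B$ means $A=B$ or $A<_\rho B$. *)

(* Defs.v *)
From HB Require Import structures.
From mathcomp Require Import all_boot all_order all_algebra.
Set Implicit Arguments. Unset Strict Implicit. Unset Printing Implicit Defensive.
Import Order.TTheory GRing.Theory Num.Theory.
Local Open Scope ring_scope.

(* Points of the plane are pairs (x, y); the standard orientation is used
   (x to the right, y upwards), so "clockwise" means negative turns. *)
Section Geo.
Variable R : rcfType.
Definition pt := (R * R)%type.

Definition padd (A B : pt) : pt := (A.1 + B.1, A.2 + B.2).
Definition psub (A B : pt) : pt := (A.1 - B.1, A.2 - B.2).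
Definition pscale (c : R) (A : pt) : pt := (c * A.1, c * A.2).
Definition cross (A B : pt) : R := A.1 * B.2 - A.2 * B.1.
Definition dot (A B : pt) : R := A.1 * B.1 + A.2 * B.2.

(* The polygon is given by n and v : nat -> pt; vertex v_i is v (i mod n)
   (0-based indices), edge e_i is the open segment from V i to V (i+1). *)
Variables (n : nat) (v : nat -> pt).
Definition V (i : nat) : pt := v (i %% n).
Definition dir (i : nat) : pt := psub (V i.+1) (V i).

(* convex polygon with vertices v_0,...,v_{n-1} in clockwise order:
   every other vertex lies strictly to the right of each directed edge *)
Definition convex_cw_polygon : Prop :=
  (3 <= n)%N /\
  forall i j, (i < n)%N -> (j < n)%N -> j != i -> j != (i.+1 %% n)%N ->
    cross (dir i) (psub (V j) (V i)) < 0.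

Definition no_parallel_edges : Prop :=
  forall i j, (i < n)%N -> (j < n)%N -> i != j -> cross (dir i) (dir j) != 0.

Definition inP (X : pt) : Prop :=
  forall i, (i < n)%N -> cross (dir i) (psub X (V i)) <= 0.

Definition on_line (i : nat) (X : pt) : Prop := cross (dir i) (psub X (V i)) = 0.

Definition dist_line (i : nat) (X : pt) : R :=
  `|cross (dir i) (psub X (V i))| / Num.sqrt (dot (dir i) (dir i)).

Definition disprod (i j : nat) (X : pt) : R := dist_line i X * dist_line j X.

Definition prec (i j : nat) : Prop :=
  i <> j /\ exists t : R, 1 <= t /\ on_line j (padd (V i) (pscale t (dir i))).

Definition preceq (i j : nat) : Prop := i = j \/ prec i j.

(* e_i is among e_s, e_{s+1}, ..., e_t (clockwise) *)
Definition in_range (s t i : nat) : Prop :=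
  (i < n)%N /\ ((i + n - s) %% n <= (t + n - s) %% n)%N.

Definition inS (s t i j : nat) : Prop :=
  prec i j /\ in_range s t i /\ in_range s t j.

Definition is_Z (i j : nat) (Z : pt) : Prop :=
  inP Z /\ forall X, inP X -> disprod i j X <= disprod i j Z.

(* Closed boundary portion from vertex V a clockwise through m edges,
   parametrized by arclength-index p in [0, m]: X lies on edge e_{a+k} at
   relative position lam, p = k + lam. *)
Definition arc_param (a m : nat) (X : pt) (p : R) : Prop :=
  exists (k : nat) (lam : R),
    0 <= lam /\ lam <= 1 /\ p = k%:R + lam /\ p <= m%:R /\
    X = padd (V (a + k)) (pscale lam (dir (a + k))).

(* rho = [v_{t+1} -> v_s] : start vertex t+1, number of edges from v_{t+1}
   clockwise to v_s *)
Definition rho_start (t : nat) : nat := t.+1.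
Definition rho_len (s t : nat) : nat := ((s + n - t.+1) %% n)%N.

Definition on_rho (s t : nat) (X : pt) : Prop :=
  exists p, arc_param (rho_start t) (rho_len s t) X p.

Definition rho_le (s t : nat) (A B : pt) : Prop :=
  exists pA pB, arc_param (rho_start t) (rho_len s t) A pA /\
                arc_param (rho_start t) (rho_len s t) B pB /\ pA <= pB.
End Geo.

(* Main.v *)
Require Import Defs.
From HB Require Import structures.
From mathcomp Require Import all_boot all_order all_algebra.
From mathcomp Require Import ring lra zify.
Set Implicit Arguments. Unset Strict Implicit. Unset Printing Implicit Defensive.
Import Order.TTheory GRing.Theory Num.Theory.
Local Open Scope ring_scope.


Definition af (R : rcfType) (n : nat) (v : nat -> pt R) (k : nat) (X : pt R) : R :=
  - cross (dir n v k) (psub X (V n v k)).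
Definition lf (R : rcfType) (n : nat) (v : nat -> pt R) (k : nat) (w : pt R) : R :=
  - cross (dir n v k) w.
Definition pconv (R : rcfType) (l : R) (A B : pt R) : pt R :=
  padd A (pscale l (psub B A)).

Lemma Vmod (R : rcfType) (n : nat) (v : nat -> pt R) (x : nat) : V n v (x %% n)%N = V n v x.
Proof. by rewrite /V modn_mod. Qed.

Lemma Veq (R : rcfType) (n : nat) (v : nat -> pt R) (x y : nat) : (x %% n = y %% n)%N -> V n v x = V n v y.
Proof. by rewrite /V => ->. Qed.

Lemma modS' (n x : nat) : ((x %% n).+1 %% n = x.+1 %% n)%N.
Proof. by rewrite -addn1 modnDml addn1. Qed.

Lemma direq (R : rcfType) (n : nat) (v : nat -> pt R) (x y : nat) : (x %% n = y %% n)%N -> dir n v x = dir n v y.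
Proof.
move=> h; rewrite /dir (Veq v h); congr psub; apply: Veq.
by rewrite -modS' h modS'.
Qed.

Lemma dirmod (R : rcfType) (n : nat) (v : nat -> pt R) (x : nat) : dir n v (x %% n)%N = dir n v x.
Proof. by apply: direq; rewrite modn_mod. Qed.

Lemma afmod (R : rcfType) (n : nat) (v : nat -> pt R) (x y : nat) X :
  (x %% n = y %% n)%N -> af n v x X = af n v y X.
Proof. by move=> h; rewrite /af (direq v h) (Veq v h). Qed.

Lemma Vsucc (R : rcfType) n (v : nat -> pt R) x : V n v x.+1 = padd (V n v x) (dir n v x).
Proof.
rewrite /dir /padd /psub /=; case: (V n v x.+1) => a b; case: (V n v x) => c d /=.
by congr pair; ring.
Qed.

Lemma af_padd (R : rcfType) n (v : nat -> pt R) k X w :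
  af n v k (padd X w) = af n v k X + lf n v k w.
Proof.
rewrite /af /lf /cross /padd /psub /=.
case: (dir n v k) => a b; case: (V n v k) => c d; case: X => x y; case: w => p q /=; ring.
Qed.

Lemma lf_scale (R : rcfType) n (v : nat -> pt R) k (l : R) w :
  lf n v k (pscale l w) = l * lf n v k w.
Proof.
rewrite /lf /cross /pscale /=; case: (dir n v k) => a b; case: w => p q /=; ring.
Qed.

Lemma af_pconv (R : rcfType) n (v : nat -> pt R) k l A B :
  af n v k (pconv l A B) = (1 - l) * af n v k A + l * af n v k B.
Proof.
rewrite /pconv /af /cross /padd /psub /pscale /=.
case: (dir n v k) => a b; case: (V n v k) => c d; case: A => x y; case: B => p q /=; ring.
Qed.

Lemma af_self (R : rcfType) n (v : nat -> pt R) k : af n v k (V n v k) = 0.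
Proof. rewrite /af /cross /psub /=; ring. Qed.

Lemma af_succ (R : rcfType) n (v : nat -> pt R) k : af n v k (V n v k.+1) = 0.
Proof. rewrite Vsucc af_padd af_self /lf /cross; ring. Qed.

Lemma af_Vsucc (R : rcfType) n (v : nat -> pt R) k m :
  af n v k (V n v m.+1) = af n v k (V n v m) + lf n v k (dir n v m).
Proof. by rewrite Vsucc af_padd. Qed.

Lemma mod_shift_neq (n x a b : nat) : (a < n)%N -> (b < n)%N -> a != b ->
  ((x + a) %% n != (x + b) %% n)%N.
Proof. by move=> ha hb hab; rewrite eqn_modDl !modn_small. Qed.

Lemma conv_pos (R : rcfType) n (v : nat -> pt R) k m :
  convex_cw_polygon n v -> (m %% n != k %% n)%N -> (m %% n != k.+1 %% n)%N ->
  0 < af n v k (V n v m).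
Proof.
move=> [hn H] h1 h2.
have n0 : (0 < n)%N by lia.
have := H (k %% n)%N (m %% n)%N (ltn_pmod _ n0) (ltn_pmod _ n0) h1.
rewrite modS' => /(_ h2).
rewrite dirmod !Vmod /af; lra.
Qed.

Lemma inP_af (R : rcfType) n (v : nat -> pt R) X k :
  (0 < n)%N -> inP n v X -> 0 <= af n v k X.
Proof.
move=> n0 h; rewrite -(afmod _ _ (modn_mod k n)) /af.
have := h _ (ltn_pmod k n0); lra.
Qed.

Lemma af_inP (R : rcfType) n (v : nat -> pt R) X :
  (forall k, (k < n)%N -> 0 <= af n v k X) -> inP n v X.
Proof. by move=> h k hk; have := h k hk; rewrite /af; lra. Qed.

Lemma af_V_ge0 (R : rcfType) n (v : nat -> pt R) k m :
  convex_cw_polygon n v -> 0 <= af n v k (V n v m).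
Proof.
move=> hc.
case: (eqVneq (m %% n)%N (k %% n)%N) => [h|h1].
  by rewrite (Veq v h) af_self.
case: (eqVneq (m %% n)%N (k.+1 %% n)%N) => [h|h2].
  by rewrite (Veq v h) af_succ.
exact/ltW/conv_pos.
Qed.

Lemma inP_V (R : rcfType) n (v : nat -> pt R) m :
  convex_cw_polygon n v -> inP n v (V n v m).
Proof. by move=> hc; apply: af_inP => k _; apply: af_V_ge0. Qed.

Lemma inP_pconv (R : rcfType) n (v : nat -> pt R) l A B :
  (0 < n)%N -> 0 <= l -> l <= 1 -> inP n v A -> inP n v B -> inP n v (pconv l A B).
Proof.
move=> n0 l0 l1 hA hB; apply: af_inP => k _; rewrite af_pconv.
have := inP_af k n0 hA; have := inP_af k n0 hB; nra.
Qed.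


Lemma conv_pos_off (R : rcfType) n (v : nat -> pt R) k a :
  convex_cw_polygon n v -> (2 <= a)%N -> (a < n)%N -> 0 < af n v k (V n v (k + a)).
Proof.
move=> hc ha1 ha2; apply: conv_pos => //.
  by rewrite -{2}[k]addn0 mod_shift_neq //; lia.
by rewrite -addn1 mod_shift_neq //; lia.
Qed.

Lemma n3 (R : rcfType) n (v : nat -> pt R) : convex_cw_polygon n v -> (2 < n)%N.
Proof. by case. Qed.

Lemma cross_consec (R : rcfType) n (v : nat -> pt R) m :
  convex_cw_polygon n v -> cross (dir n v m) (dir n v m.+1) < 0.
Proof.
move=> hc; have := conv_pos_off m hc (isT : (2 <= 2)%N) (n3 hc).
rewrite addn2 af_Vsucc af_succ /lf; lra.
Qed.

Lemma cross_anti (R : rcfType) (a b : pt R) : cross a b = - cross b a.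
Proof. rewrite /cross; ring. Qed.

Lemma cone_lemma (R : rcfType) n (v : nat -> pt R) k x X :
  convex_cw_polygon n v -> inP n v X ->
  af n v k (V n v x.+1) <= af n v k (V n v x) ->
  af n v k (V n v x.+1) <= af n v k (V n v x.+2) ->
  af n v k (V n v x.+1) <= af n v k X.
Proof.
move=> hc hX h1 h2.
have n0 : (0 < n)%N by have := n3 hc; lia.
have D := cross_consec x hc.
have ax := inP_af x n0 hX; have ax1 := inP_af x.+1 n0 hX.
move: h1 h2 ax ax1 D; clear hX.
rewrite (af_Vsucc _ _ _ x.+1) /af /lf (Vsucc n v x).
set e1 := dir n v x; set e2 := dir n v x.+1; set dk := dir n v k; set Vk := V n v k.
set P0 := V n v x.
case: e1 => a1 a2; case: e2 => b1 b2; case: dk => c1 c2; case: Vk => q1 q2;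
case: P0 => p1 p2; case: X => y1 y2; rewrite /cross /psub /padd /=.
move=> h1 h2 ax ax1 D.
set Dl := (a1 * b2 - a2 * b1).
set del := ( - (c1 * (y2 - (p2 + a2 + b2)) - c2 * (y1 - (p1 + a1 + b1)))) -
  ( - (c1 * (p2 + a2 - q2) - c2 * (p1 + a1 - q1))).
have e : Dl * (- (c1 * (y2 - q2) - c2 * (y1 - q1)) - - (c1 * (p2 + a2 - q2) - c2 * (p1 + a1 - q1)))
  = (- (b1 * (y2 - (p2 + a2)) - b2 * (y1 - (p1 + a1)))) * (- (c1 * a2 - c2 * a1))
    - (- (a1 * (y2 - p2) - a2 * (y1 - p1))) * (- (c1 * b2 - c2 * b1)).
  rewrite /Dl; ring.
nra.
Qed.

Lemma dec_step (R : rcfType) n (v : nat -> pt R) k m :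
  convex_cw_polygon n v -> (1 <= m)%N -> (m.+1 < n)%N ->
  0 < cross (dir n v k) (dir n v (k + m)) ->
  0 < cross (dir n v k) (dir n v (k + m.+1)).
Proof.
move=> hc h1 h2 hpos.
rewrite ltNge; apply/negP => hle.
have hX := inP_V k hc.
have := @cone_lemma R n v k (k + m) (V n v k) hc hX.
rewrite af_self -addnS.
have e1 : af n v k (V n v (k + m.+1)) = af n v k (V n v (k+m)) - cross (dir n v k) (dir n v (k+m)).
  by rewrite addnS af_Vsucc /lf; lra.
have e2 : af n v k (V n v (k + m.+2)) = af n v k (V n v (k+m.+1)) - cross (dir n v k) (dir n v (k+m.+1)).
  by rewrite (addnS k m.+1) af_Vsucc /lf; lra.
rewrite -addnS e2 e1.
have := conv_pos_off k hc (_ : (2 <= m.+1)%N) h2.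
rewrite e1 => hp.
have H1 : (2 <= m.+1)%N by lia.
move=> /(_ _ _) H; have := hp H1; lra.
Qed.

Lemma Dec (R : rcfType) n (v : nat -> pt R) k p q :
  convex_cw_polygon n v -> (1 <= p)%N -> (p <= q)%N -> (q < n)%N ->
  0 < cross (dir n v k) (dir n v (k + p)) ->
  0 < cross (dir n v k) (dir n v (k + q)).
Proof.
move=> hc h1; elim: q => [|q IH] hpq hqn hp; first by lia.
case: (eqVneq p q.+1) => [<- //|hne].
apply: dec_step => //; first by lia.
apply: IH => //; lia.
Qed.

Lemma np_mod (R : rcfType) n (v : nat -> pt R) x y :
  convex_cw_polygon n v -> no_parallel_edges n v ->
  (x %% n != y %% n)%N -> cross (dir n v x) (dir n v y) != 0.
Proof.
move=> hc hnp h.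
have n0 : (0 < n)%N by have := n3 hc; lia.
have := hnp _ _ (ltn_pmod x n0) (ltn_pmod y n0) h.
by rewrite !dirmod.
Qed.

Lemma np_off (R : rcfType) n (v : nat -> pt R) k a b :
  convex_cw_polygon n v -> no_parallel_edges n v ->
  (a < n)%N -> (b < n)%N -> a != b ->
  cross (dir n v (k + a)) (dir n v (k + b)) != 0.
Proof. by move=> hc hnp ha hb hab; apply: np_mod => //; apply: mod_shift_neq. Qed.

Lemma cross_trans_gen (R : rcfType) (a x y z : pt R) :
  cross a y < 0 -> 0 < cross a x * cross y z -> 0 <= cross a z * cross x y ->
  cross x z < 0.
Proof.
have e : cross a y * cross x z = cross a x * cross y z + cross a z * cross x y.
  rewrite /cross; ring.
move=> h1 h2 h3; nra.
Qed.

Lemma cross_trans (R : rcfType) (a x y z : pt R) :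
  cross a x < 0 -> cross a y < 0 -> cross a z < 0 ->
  cross x y < 0 -> cross y z < 0 -> cross x z < 0.
Proof.
move=> h1 h2 h3 h4 h5; apply: (cross_trans_gen (a:=a) (y:=y)) => //; nra.
Qed.


Lemma pos_mod (n s i : nat) : (s < n)%N -> (i < n)%N -> ((s + (i + n - s) %% n) %% n = i)%N.
Proof.
move=> hs hi; rewrite modnDmr.
have -> : (s + (i + n - s) = i + n)%N by lia.
by rewrite modnDr modn_small.
Qed.

Lemma dir_n (R : rcfType) n (v : nat -> pt R) x : dir n v (x + n) = dir n v x.
Proof. by apply: direq; rewrite modnDr. Qed.

Lemma V_n (R : rcfType) n (v : nat -> pt R) x : V n v (x + n) = V n v x.
Proof. by apply: Veq; rewrite modnDr. Qed.

Lemma prec_cross (R : rcfType) n (v : nat -> pt R) i j :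
  convex_cw_polygon n v -> no_parallel_edges n v -> (i < n)%N -> (j < n)%N ->
  prec n v i j -> cross (dir n v i) (dir n v j) < 0.
Proof.
move=> hc hnp hi hj [hij [t [ht hon]]].
have hne : cross (dir n v j) (dir n v i) != 0.
  apply: np_mod => //; rewrite !modn_small //; apply/eqP => e; exact: hij (esym e).
have e : af n v j (padd (V n v i) (pscale t (dir n v i))) = 0.
  by rewrite /af hon oppr0.
rewrite af_padd lf_scale /lf in e.
have := af_V_ge0 j i hc.
rewrite (cross_anti (dir n v i)).
move: hne; rewrite neq_lt => /orP [] h; nra.
Qed.

Lemma last_pos (R : rcfType) n (v : nat -> pt R) s :
  convex_cw_polygon n v -> 0 < cross (dir n v s) (dir n v (s + n.-1)).
Proof.
move=> hc; have n3' := n3 hc.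
have h := conv_pos_off s hc (_ : (2 <= n.-1)%N) (_ : (n.-1 < n)%N).
have e : af n v s (V n v (s + n)) = af n v s (V n v (s + n.-1)) + lf n v s (dir n v (s + n.-1)).
  by rewrite -af_Vsucc; congr af; congr V; lia.
rewrite V_n af_self /lf in e.
have := h ltac:(lia) ltac:(lia); lra.
Qed.

Lemma range_first (R : rcfType) n (v : nat -> pt R) s L :
  convex_cw_polygon n v -> no_parallel_edges n v -> (L < n)%N ->
  cross (dir n v s) (dir n v (s + L)) < 0 ->
  forall q, (1 <= q)%N -> (q <= L)%N -> cross (dir n v s) (dir n v (s + q)) < 0.
Proof.
move=> hc hnp hL hsL q h1 h2.
have hne : cross (dir n v (s + 0)) (dir n v (s + q)) != 0.
  apply: np_off => //; lia.
rewrite addn0 in hne.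
move: hne; rewrite neq_lt => /orP [] // h.
have := Dec hc h1 h2 hL h; lra.
Qed.

Lemma range_order (R : rcfType) n (v : nat -> pt R) s L :
  convex_cw_polygon n v -> no_parallel_edges n v -> (L < n)%N ->
  cross (dir n v s) (dir n v (s + L)) < 0 ->
  forall p q, (p < q)%N -> (q <= L)%N -> cross (dir n v (s + p)) (dir n v (s + q)) < 0.
Proof.
move=> hc hnp hL hsL p q hpq hqL.
have hf := range_first hc hnp hL hsL.
case: p hpq => [|p] hpq; first by rewrite addn0; apply: hf => //; lia.
elim: q hpq hqL => [|q IH] hpq hqL; first by lia.
case: (eqVneq q p.+1) => [->|hne].
  rewrite [(s + p.+2)%N]addnS; exact: cross_consec.
apply: (cross_trans (a := dir n v s) (y := dir n v (s + q))).
- apply: hf; lia.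
- apply: hf; lia.
- apply: hf; lia.
- apply: IH; lia.
- rewrite [(s + q.+1)%N]addnS; exact: cross_consec.
Qed.

Lemma rho_excl (R : rcfType) n (v : nat -> pt R) s pu pw k :
  convex_cw_polygon n v -> (pu < pw)%N -> (pw < k)%N -> (k < n)%N ->
  cross (dir n v (s + pu)) (dir n v (s + k)) < 0 ->
  0 < cross (dir n v (s + k)) (dir n v (s + pw)).
Proof.
move=> hc h1 h2 h3 h.
have eu : dir n v (s + k + (n - k + pu)) = dir n v (s + pu).
  have -> : (s + k + (n - k + pu) = (s + pu) + n)%N by lia.
  by rewrite dir_n.
have ew : dir n v (s + k + (n - k + pw)) = dir n v (s + pw).
  have -> : (s + k + (n - k + pw) = (s + pw) + n)%N by lia.
  by rewrite dir_n.
rewrite -ew; apply: (Dec (p := (n - k + pu)%N)) => //; try lia.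
rewrite eu cross_anti; lra.
Qed.


Lemma sigma_analysis (R : rcfType) (sg gV : nat -> R) (c l : R) (r L pi pj : nat) :
  (forall m, gV m.+1 = gV m + sg m) -> (forall m, gV m <= c) ->
  (forall m, (m <= pi)%N -> sg m < 0) ->
  (forall m, (pj <= m)%N -> (m <= L)%N -> 0 < sg m) ->
  (forall m, (1 <= m)%N -> (m < L)%N -> 0 <= sg m -> 0 < sg m.+1) ->
  (pi < pj)%N -> (pj <= L)%N -> (r <= L)%N -> 0 <= l -> l <= 1 ->
  gV r + l * sg r = c ->
  (r = 0%N /\ l = 0) \/ (r = L /\ l = 1).
Proof.
move=> hg hc hneg hpos hprop hij hjL hrL l0 l1 hZ.
have hs0 : sg 0%N < 0 by apply: hneg.
have hsL : 0 < sg L by apply: hpos.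
have g1 := hg r; have gc1 := hc r.+1; have gc0 := hc r.
case: (ltrgtP (sg r) 0) => hsr.
-
  case: (ltrgtP l 0) => hl; first by lra.
  + have := hc r; nra.
  + case: r hrL hZ hsr g1 gc1 gc0 => [|r] hrL hZ hsr g1 gc1 gc0; first by left.
    exfalso.
    have g0 := hg r; have gc := hc r.
    case: (ltrgtP (sg r) 0) => hs'.
    * rewrite hl in hZ; lra.
    * have hr1 : (1 <= r)%N.
        case: r hs' {g0 gc hrL hZ hsr g1 gc1 gc0} => // hs'; lra.
      have := hprop r hr1 ltac:(lia) ltac:(lra); lra.
    * have hr1 : (1 <= r)%N.
        case: r hs' {g0 gc hrL hZ hsr g1 gc1 gc0} => // hs'; lra.
      have := hprop r hr1 ltac:(lia) ltac:(lra); lra.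
-
  case: (ltrgtP l 1) => hl.
  + nra.
  + lra.
  + case: (eqVneq r L) => [->|hrL']; first by right.
    exfalso.
    have hr1 : (1 <= r)%N.
      case: r hsr {hrL hZ g1 gc1 gc0 hrL'} => // hs'; lra.
    have := hprop r hr1 ltac:(lia) ltac:(lra).
    have := hg r.+1; have := hc r.+2; rewrite hl in hZ; lra.
-
  exfalso.
  have hr1 : (1 <= r)%N.
    case: r hsr {hrL hZ g1 gc1 gc0} => // hs'; lra.
  have hrL' : (r < L)%N.
    rewrite ltn_neqAle hrL andbT; apply/eqP => e; rewrite e in hsr; lra.
  have := hprop r hr1 hrL' ltac:(lra).
  have := hg r.+1; have := hc r.+2; rewrite hsr in hZ g1; lra.
Qed.

Lemma dot_pos (R : rcfType) (a b : pt R) : cross a b != 0 -> 0 < dot a a.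
Proof.
case: a => a1 a2; case: b => b1 b2; rewrite /cross /dot /= => h.
have e : (a1 * a1 + a2 * a2) * (b1 * b1 + b2 * b2) =
  (a1 * b2 - a2 * b1) ^+ 2 + (a1 * b1 + a2 * b2) ^+ 2 by ring.
have hA : 0 <= a1 * a1 + a2 * a2 by nra.
have hB : 0 <= b1 * b1 + b2 * b2 by nra.
have hc2 : 0 < (a1 * b2 - a2 * b1) * (a1 * b2 - a2 * b1).
  by move: h; rewrite neq_lt => /orP [] h'; nra.
have hAB : 0 < (a1 * a1 + a2 * a2) * (b1 * b1 + b2 * b2).
  rewrite e !expr2; nra.
rewrite lt_neqAle hA andbT; apply/eqP => hA0; rewrite -hA0 mul0r in hAB; lra.
Qed.

Lemma rk_pos (R : rcfType) n (v : nat -> pt R) k :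
  convex_cw_polygon n v -> 0 < Num.sqrt (dot (dir n v k) (dir n v k)).
Proof.
move=> hc; rewrite sqrtr_gt0; apply: (@dot_pos _ _ (dir n v k.+1)).
by have := cross_consec k hc; rewrite lt_neqAle => /andP [].
Qed.

Lemma dist_af (R : rcfType) n (v : nat -> pt R) k X :
  (0 < n)%N -> inP n v X ->
  dist_line n v k X = af n v k X / Num.sqrt (dot (dir n v k) (dir n v k)).
Proof.
move=> n0 hX; rewrite /dist_line; congr (_ / _).
have := inP_af k n0 hX; rewrite /af => h.
by rewrite ler0_norm //; lra.
Qed.

Lemma isZ_max (R : rcfType) n (v : nat -> pt R) i j Z :
  convex_cw_polygon n v -> is_Z n v i j Z ->
  inP n v Z /\ forall X, inP n v X -> af n v i X * af n v j X <= af n v i Z * af n v j Z.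
Proof.
move=> hc [hZ H]; split => // X hX.
have n0 : (0 < n)%N by have := n3 hc; lia.
have := H X hX; rewrite /disprod (dist_af i n0 hX) (dist_af j n0 hX) (dist_af i n0 hZ) (dist_af j n0 hZ).
have ri := rk_pos i hc; have rj := rk_pos j hc.
set ri' := Num.sqrt _ in ri *; set rj' := Num.sqrt _ in rj *.
move=> h.
have hp : 0 < ri' * rj' by apply: mulr_gt0.
have := ler_wpM2r (ltW hp) h.
have ee : forall x y : R, x / ri' * (y / rj') * (ri' * rj') = x * y.
  move=> x y; field; apply/andP; split; apply/lt0r_neq0 => //.
by rewrite !ee.
Qed.

Lemma pos_exists (R : rcfType) n (v : nat -> pt R) i j :
  convex_cw_polygon n v ->
  exists X, inP n v X /\ 0 < af n v i X /\ 0 < af n v j X.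
Proof.
move=> hc; have n0 : (0 < n)%N by have := n3 hc; lia.
exists (pconv (1/2) (V n v (i + 2)) (V n v (j + 2))).
have hi := conv_pos_off i hc (isT : (2 <= 2)%N) (n3 hc).
have hj := conv_pos_off j hc (isT : (2 <= 2)%N) (n3 hc).
have hi' := af_V_ge0 i (j + 2) hc; have hj' := af_V_ge0 j (i + 2) hc.
split; first by apply: inP_pconv => //; try apply: inP_V => //; lra.
by rewrite !af_pconv; split; lra.
Qed.

Lemma supp (R : rcfType) n (v : nat -> pt R) i j Z :
  (0 < n)%N -> inP n v Z ->
  (forall X, inP n v X -> af n v i X * af n v j X <= af n v i Z * af n v j Z) ->
  forall X, inP n v X ->
  af n v j Z * af n v i X + af n v i Z * af n v j X <= 2 * (af n v i Z * af n v j Z).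
Proof.
move=> n0 hZ H X hX.
set al := af n v i Z; set be := af n v j Z; set x := af n v i X; set y := af n v j X.
rewrite leNgt; apply/negP => hL.
set u := x - al; set w := y - be; set L := be * u + al * w.
have hL' : 0 < L by rewrite /L /u /w; lra.
have hD : 0 < L + u ^+ 2 + w ^+ 2 by have := sqr_ge0 u; have := sqr_ge0 w; lra.
set e := L / (L + u ^+ 2 + w ^+ 2).
have he : e * (L + u ^+ 2 + w ^+ 2) = L by rewrite /e; field; apply: lt0r_neq0.
have e0 : 0 < e by apply: divr_gt0.
have e1 : e <= 1.
  rewrite /e ler_pdivrMr //; have := sqr_ge0 u; have := sqr_ge0 w; lra.
have := H (pconv e Z X) (inP_pconv n0 (ltW e0) e1 hZ hX).
rewrite !af_pconv -/al -/be -/x -/y.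
have key : 0 <= e * (u + w) ^+ 2 by apply: mulr_ge0; [lra | apply: sqr_ge0].
have key2 : 0 <= e * (u - w) ^+ 2 by apply: mulr_ge0; [lra | apply: sqr_ge0].
have ee : ((1 - e) * al + e * x) * ((1 - e) * be + e * y) - al * be = e * (L + e * u * w).
  rewrite /L /u /w; ring.
have : 0 < L + e * u * w.
  have : 2 * (e * u * w) >= - (e * (u ^+ 2 + w ^+ 2)).
    move: key2; rewrite !expr2; lra.
  move: he; rewrite !expr2; nra.
nra.
Qed.

Lemma pert_aux (R : rcfType) n (v : nat -> pt R) Z w (N : nat) :
  (forall m, (m < N)%N -> 0 < af n v m Z) ->
  exists e : R, 0 < e /\ forall m, (m < N)%N -> 0 <= af n v m Z + e * lf n v m w.
Proof.
elim: N => [|N IH] hpos.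
  by exists 1; split => // m.
have [e [e0 He]] : exists e : R, 0 < e /\ forall m, (m < N)%N -> 0 <= af n v m Z + e * lf n v m w.
  by apply: IH => m hm; apply: hpos; lia.
have aN := hpos N (ltnSn N).
case: (lerP 0 (af n v N Z + e * lf n v N w)) => hN.
  exists e; split => // m; rewrite ltnS leq_eqVlt => /orP [/eqP ->//|hm].
  exact: He.
set a := af n v N Z; set b := lf n v N w.
have hb : b < 0 by rewrite /b; nra.
exists (a / (- b)); split.
  by apply: divr_gt0; lra.
have he' : a / - b < e.
  by rewrite ltr_pdivrMr; lra.
move=> m; rewrite ltnS leq_eqVlt => /orP [/eqP ->|hm].
  rewrite -/a -/b; have -> : a / - b * b = - a by field; lra.
  lra.
have := He m hm; have := hpos m (ltnW (leq_trans hm (leqnn _))).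
case: (lerP 0 (lf n v m w)) => hl.
  have : 0 <= a / - b by apply: divr_ge0; lra.
  nra.
nra.
Qed.

Lemma pert (R : rcfType) n (v : nat -> pt R) Z w :
  (forall m, (m < n)%N -> 0 < af n v m Z) ->
  exists e : R, 0 < e /\ inP n v (padd Z (pscale e w)).
Proof.
move=> h; have [e [e0 He]] := pert_aux w h.
exists e; split => //; apply: af_inP => m hm.
by rewrite af_padd lf_scale; apply: He.
Qed.

Lemma boundary (R : rcfType) n (v : nat -> pt R) i j Z :
  (0 < n)%N -> inP n v Z ->
  (forall X, inP n v X -> af n v i X * af n v j X <= af n v i Z * af n v j Z) ->
  0 < af n v i Z -> 0 < af n v j Z -> cross (dir n v i) (dir n v j) < 0 ->
  exists k, (k < n)%N /\ af n v k Z = 0.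
Proof.
move=> n0 hZ H hi hj hij.
case: (boolP [exists k : 'I_n, af n v k Z == 0]) => [/existsP [k /eqP hk]|hno].
  by exists k.
have hall : forall m, (m < n)%N -> 0 < af n v m Z.
  move=> m hm; rewrite lt_neqAle (inP_af m n0 hZ) andbT.
  apply/negP => /eqP e; move/negP: hno; apply; apply/existsP; exists (Ordinal hm).
  by rewrite /= -e.
have [e [e0 he]] := pert (psub (dir n v j) (dir n v i)) hall.
exfalso; have := H _ he; rewrite !af_padd !lf_scale /lf.
have -> : cross (dir n v i) (psub (dir n v j) (dir n v i)) = cross (dir n v i) (dir n v j).
  by rewrite /cross /psub /=; case: (dir n v i) => [a b]; case: (dir n v j) => [c d] /=; ring.
have -> : cross (dir n v j) (psub (dir n v j) (dir n v i)) = cross (dir n v i) (dir n v j).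
  by rewrite /cross /psub /=; case: (dir n v i) => [a b]; case: (dir n v j) => [c d] /=; ring.
have hk : 0 < e * - cross (dir n v i) (dir n v j) by apply: mulr_gt0; lra.
set k := e * - cross _ _ in hk *.
rewrite -!/k; nra.
Qed.

Lemma par_decomp (R : rcfType) (d P Z : pt R) :
  cross d (psub Z P) = 0 -> 0 < dot d d ->
  Z = padd P (pscale (dot d (psub Z P) / dot d d) d).
Proof.
case: d => d1 d2; case: P => p1 p2; case: Z => z1 z2.
rewrite /cross /dot /padd /psub /pscale /= => hk hd.
have hd' : d1 * d1 + d2 * d2 != 0 by apply: lt0r_neq0.
set q := (_ / _).
have hl : q * (d1 * d1 + d2 * d2) = d1 * (z1 - p1) + d2 * (z2 - p2) by rewrite /q divfK.
have e1 : forall a b : R, (d1 * d1 + d2 * d2) * (a + q * b) = (d1 * d1 + d2 * d2) * a + (q * (d1 * d1 + d2 * d2)) * b.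
  by move=> a b; ring.
congr pair; apply: (mulfI hd'); rewrite e1 hl.
  have := congr1 (fun x => d2 * x) hk; rewrite /= mulr0 => h2; nra.
have := congr1 (fun x => d1 * x) hk; rewrite /= mulr0 => h2; nra.
Qed.

Lemma edge_decomp (R : rcfType) n (v : nat -> pt R) k Z :
  convex_cw_polygon n v -> inP n v Z -> af n v k Z = 0 ->
  exists l : R, 0 <= l /\ l <= 1 /\ Z = padd (V n v k) (pscale l (dir n v k)).
Proof.
move=> hc hZ hk.
have n3' := n3 hc.
have n0 : (0 < n)%N by lia.
have hd : 0 < dot (dir n v k) (dir n v k).
  apply: (@dot_pos _ _ (dir n v k.+1)).
  by have := cross_consec k hc; rewrite lt_neqAle => /andP [].
set l := dot (dir n v k) (psub Z (V n v k)) / dot (dir n v k) (dir n v k).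
have eZ : Z = padd (V n v k) (pscale l (dir n v k)).
  by apply: par_decomp => //; move: hk; rewrite /af; lra.
exists l; split; last split => //.
- (* l >= 0 via edge k-1 *)
  have h1 := inP_af (k + n.-1) n0 hZ.
  have hV : V n v k = V n v (k + n.-1).+1.
    apply: Veq; have -> : ((k + n.-1).+1 = k + n)%N by lia.
    by rewrite modnDr.
  have hV1 : V n v k.+1 = V n v ((k + n.-1) + 2).
    apply: Veq; have -> : ((k + n.-1) + 2 = k.+1 + n)%N by lia.
    by rewrite modnDr.
  have hp := conv_pos_off (k + n.-1) hc (isT : (2 <= 2)%N) (n3 hc).
  rewrite -hV1 in hp.
  have e1 : af n v (k + n.-1) (V n v k) = 0 by rewrite hV af_succ.
  have e2 : af n v (k + n.-1) (V n v k.+1) = af n v (k + n.-1) (V n v k) + lf n v (k + n.-1) (dir n v k).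
    by rewrite af_Vsucc.
  move: h1; rewrite eZ af_padd lf_scale e1; nra.
- have h1 := inP_af k.+1 n0 hZ.
  have hp : 0 < af n v k.+1 (V n v k).
    apply: conv_pos => //.
      by rewrite -addn1 -{1}[k]addn0 mod_shift_neq //; lia.
    by rewrite -addn2 -{1}[k]addn0 mod_shift_neq //; lia.
  have e2 : af n v k.+1 (V n v k.+1) = af n v k.+1 (V n v k) + lf n v k.+1 (dir n v k).
    by rewrite af_Vsucc.
  rewrite af_self in e2.
  move: h1; rewrite eZ af_padd lf_scale; nra.
Qed.


Lemma cross_self (R : rcfType) (a : pt R) : cross a a = 0.
Proof. rewrite /cross; ring. Qed.

Lemma pscale1 (R : rcfType) (a : pt R) : pscale 1 a = a.
Proof. by case: a => x y; rewrite /pscale !mul1r. Qed.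

Lemma padd_scale0 (R : rcfType) (a b : pt R) : padd a (pscale 0 b) = a.
Proof. by case: a => x y; rewrite /padd /pscale /= !mul0r !addr0. Qed.

Lemma lf_comb (R : rcfType) n (v : nat -> pt R) k k' (b a : R) w :
  b * lf n v k w + a * lf n v k' w =
  - cross (padd (pscale b (dir n v k)) (pscale a (dir n v k'))) w.
Proof.
rewrite /lf /cross /padd /pscale /=.
case: (dir n v k) => [p q]; case: (dir n v k') => [c d]; case: w => [x y] /=; ring.
Qed.

Lemma cross_comb (R : rcfType) (x d d' : pt R) (b a : R) :
  cross x (padd (pscale b d) (pscale a d')) = b * cross x d + a * cross x d'.
Proof.
rewrite /cross /padd /pscale /=.
case: x => [p q]; case: d => [c e]; case: d' => [f g] /=; ring.
Qed.

Lemma sig_neg (R : rcfType) n (v : nat -> pt R) s L pi pj m (al be : R) :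
  convex_cw_polygon n v -> no_parallel_edges n v -> (L < n)%N ->
  cross (dir n v s) (dir n v (s + L)) < 0 -> 0 < al -> 0 < be ->
  (pi < pj)%N -> (pj <= L)%N -> (m <= pi)%N ->
  be * lf n v (s + pi) (dir n v (s + m)) + al * lf n v (s + pj) (dir n v (s + m)) < 0.
Proof.
move=> hc hnp hLn hsL hal hbe hij hjL hm.
have hord := range_order hc hnp hLn hsL.
rewrite /lf.
have h1 : cross (dir n v (s + pi)) (dir n v (s + m)) >= 0.
  case: (eqVneq m pi) => [->|hne]; first by rewrite cross_self.
  rewrite cross_anti; have := hord m pi ltac:(lia) ltac:(lia); lra.
have h2 : cross (dir n v (s + pj)) (dir n v (s + m)) > 0.
  rewrite cross_anti; have := hord m pj ltac:(lia) ltac:(lia); lra.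
have := mulr_ge0 (ltW hbe) h1; have := mulr_gt0 hal h2.
move: h1 h2; clear; lra.
Qed.

Lemma sig_pos (R : rcfType) n (v : nat -> pt R) s L pi pj m (al be : R) :
  convex_cw_polygon n v -> no_parallel_edges n v -> (L < n)%N ->
  cross (dir n v s) (dir n v (s + L)) < 0 -> 0 < al -> 0 < be ->
  (pi < pj)%N -> (pj <= m)%N -> (m <= L)%N ->
  0 < be * lf n v (s + pi) (dir n v (s + m)) + al * lf n v (s + pj) (dir n v (s + m)).
Proof.
move=> hc hnp hLn hsL hal hbe hij hm hmL.
have hord := range_order hc hnp hLn hsL.
rewrite /lf.
have h1 : cross (dir n v (s + pi)) (dir n v (s + m)) < 0 by apply: hord; lia.
have h2 : cross (dir n v (s + pj)) (dir n v (s + m)) <= 0.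
  case: (eqVneq m pj) => [->|hne]; first by rewrite cross_self.
  have := hord pj m ltac:(lia) ltac:(lia); lra.
have ha : 0 < - cross (dir n v (s + pi)) (dir n v (s + m)) by lra.
have hb : 0 <= - cross (dir n v (s + pj)) (dir n v (s + m)) by lra.
have := mulr_gt0 hbe ha; have := mulr_ge0 (ltW hal) hb.
move: ha hb; clear; lra.
Qed.

Lemma sig_prop (R : rcfType) n (v : nat -> pt R) s L pi pj m (al be : R) :
  convex_cw_polygon n v -> no_parallel_edges n v -> (L < n)%N ->
  cross (dir n v s) (dir n v (s + L)) < 0 -> 0 < al -> 0 < be ->
  (pi < pj)%N -> (pj <= L)%N -> (1 <= m)%N -> (m < L)%N ->
  0 <= be * lf n v (s + pi) (dir n v (s + m)) + al * lf n v (s + pj) (dir n v (s + m)) ->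
  0 < be * lf n v (s + pi) (dir n v (s + m.+1)) + al * lf n v (s + pj) (dir n v (s + m.+1)).
Proof.
move=> hc hnp hLn hsL hal hbe hij hjL h1 h2.
have hfirst := range_first hc hnp hLn hsL.
rewrite !lf_comb.
set H0 := padd _ _ => hm.
have hy : cross (dir n v s) (dir n v (s + m)) < 0 by apply: hfirst; lia.
have hz : cross (dir n v s) (dir n v (s + m.+1)) < 0 by apply: hfirst; lia.
have hyz : cross (dir n v (s + m)) (dir n v (s + m.+1)) < 0.
  by rewrite addnS; apply: cross_consec.
have ha : cross (dir n v s) H0 < 0.
  rewrite /H0 cross_comb.
  have hi0 : cross (dir n v s) (dir n v (s + pi)) <= 0.
    case: (eqVneq pi 0%N) => [e|hne].
      by rewrite e addn0 cross_self.
    have := hfirst pi ltac:(lia) ltac:(lia); lra.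
  have hj0 : cross (dir n v s) (dir n v (s + pj)) < 0 by apply: hfirst; lia.
  have hi0' : 0 <= - cross (dir n v s) (dir n v (s + pi)) by lra.
  have hj0' : 0 < - cross (dir n v s) (dir n v (s + pj)) by lra.
  have := mulr_ge0 (ltW hbe) hi0'; have := mulr_gt0 hal hj0'.
  move: hi0' hj0'; clear; lra.
have : cross H0 (dir n v (s + m.+1)) < 0.
  apply: (cross_trans_gen (a := dir n v s) (y := dir n v (s + m))) => //.
    rewrite -[cross (dir n v s) H0]opprK -[cross _ (dir n v (s + m.+1))]opprK mulrNN.
    apply: mulr_gt0; lra.
  rewrite -[cross (dir n v s) _]opprK -[cross H0 _]opprK mulrNN.
  apply: mulr_ge0; lra.
move: hm; clear; lra.
Qed.

Lemma part1_pos (R : rcfType) n (v : nat -> pt R) s L pi pj Z :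
  convex_cw_polygon n v -> no_parallel_edges n v -> (s < n)%N -> (L < n)%N ->
  cross (dir n v s) (dir n v (s + L)) < 0 ->
  (pi < pj)%N -> (pj <= L)%N -> inP n v Z ->
  (forall X, inP n v X -> af n v (s + pi) X * af n v (s + pj) X <=
                          af n v (s + pi) Z * af n v (s + pj) Z) ->
  exists x l, (x < n.-1 - L)%N /\ 0 <= l /\ l <= 1 /\
    Z = padd (V n v (s + (L.+1 + x))) (pscale l (dir n v (s + (L.+1 + x)))).
Proof.
move=> hc hnp hsn hLn hsL hij hjL hZ H.
have n3' := n3 hc; have n0 : (0 < n)%N by lia.
have hLn2 : (L < n.-1)%N.
  rewrite ltn_neqAle -ltnS prednK // hLn andbT; apply/eqP => e.
  have := last_pos s hc; rewrite -e; lra.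
set i := (s + pi)%N; set j := (s + pj)%N.
set al := af n v i Z; set be := af n v j Z.
have [X0 [hX0 [hX0i hX0j]]] := pos_exists i j hc.
have hal0 : 0 <= al := inP_af i n0 hZ.
have hbe0 : 0 <= be := inP_af j n0 hZ.
have hf : 0 < al * be.
  have := H X0 hX0; have : 0 < af n v i X0 * af n v j X0 by apply: mulr_gt0.
  rewrite -/i -/j -/al -/be; lra.
have hal : 0 < al.
  rewrite lt_neqAle hal0 andbT; apply/eqP => e; rewrite -e mul0r in hf; lra.
have hbe : 0 < be.
  rewrite lt_neqAle hbe0 andbT; apply/eqP => e; rewrite -e mulr0 in hf; lra.
have hord := range_order hc hnp hLn hsL.
have hfirst := range_first hc hnp hLn hsL.
have hij' : cross (dir n v i) (dir n v j) < 0 by apply: hord.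
have [k [hk hkZ]] := boundary n0 hZ H hal hbe hij'.
have [l [l0 [l1 eZ]]] := edge_decomp hc hZ hkZ.
set r := ((k + n - s) %% n)%N.
have hr : ((s + r) %% n = k %% n)%N by rewrite pos_mod // modn_small.
have hrn : (r < n)%N by rewrite /r ltn_pmod.
rewrite (Veq v (esym hr)) (direq v (esym hr)) in eZ.
case: (ltnP L r) => hLr.
  exists (r - L.+1)%N, l; split; first by clear -hLr hrn hLn2; lia.
  split => //; split => //.
  by have -> : (L.+1 + (r - L.+1) = r)%N by clear -hLr; lia.
set sg := fun m => be * lf n v i (dir n v (s + m)) + al * lf n v j (dir n v (s + m)).
set gV := fun m => be * af n v i (V n v (s + m)) + al * af n v j (V n v (s + m)).
have hg : forall m, gV m.+1 = gV m + sg m.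
  by move=> m; rewrite /gV /sg /= addnS !af_Vsucc; ring.
have hgc : forall m, gV m <= 2 * (al * be).
  move=> m; have := supp n0 hZ H (inP_V (s + m) hc); rewrite /gV -/i -/j -/al -/be; lra.
have hs0 : dir n v (s + 0) = dir n v s by rewrite addn0.
have hneg : forall m, (m <= pi)%N -> sg m < 0.
  by move=> m hm; apply: (sig_neg hc hnp hLn hsL).
have hpos : forall m, (pj <= m)%N -> (m <= L)%N -> 0 < sg m.
  by move=> m hm hmL; apply: (sig_pos hc hnp hLn hsL).
have hprop : forall m, (1 <= m)%N -> (m < L)%N -> 0 <= sg m -> 0 < sg m.+1.
  by move=> m h1 h2; apply: (sig_prop hc hnp hLn hsL).
have hZeq : gV r + l * sg r = 2 * (al * be).
  rewrite /gV /sg /= /al /be eZ !af_padd !lf_scale; ring.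
have := sigma_analysis hg hgc hneg hpos hprop hij hjL hLr l0 l1 hZeq.
case=> [[er el]|[er el]].
- exists (n.-1 - L.+1)%N, 1; split; first by clear -hLn2; lia.
  split; first lra. split; first lra.
  rewrite pscale1 -Vsucc eZ er el padd_scale0 addn0 -(@V_n R n v s).
  by congr V; clear -hLn2; lia.
- exists 0%N, 0; split; first by clear -hLn2; lia.
  split; first lra. split; first lra.
  by rewrite padd_scale0 eZ er el pscale1 -Vsucc addn0 addnS.
Qed.


Definition Rr (R : rcfType) n (v : nat -> pt R) (u w : nat) (X Y : pt R) : Prop :=
  af n v w X * af n v u Y <= af n v w Y * af n v u X.

Lemma Rr_refl (R : rcfType) n (v : nat -> pt R) u w X : Rr n v u w X X.
Proof. by rewrite /Rr. Qed.

Lemma Rr_trans (R : rcfType) n (v : nat -> pt R) u w X Y Z :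
  Rr n v u w X Y -> Rr n v u w Y Z -> 0 < af n v u Y ->
  0 <= af n v u X -> 0 <= af n v u Z -> Rr n v u w X Z.
Proof.
rewrite /Rr => h1 h2 hY hX hZ.
have h1' := ler_wpM2r hZ h1.
have h2' := ler_wpM2r hX h2.
have : af n v w X * af n v u Z * af n v u Y <= af n v w Z * af n v u X * af n v u Y.
  apply: le_trans (_ : af n v w Y * af n v u X * af n v u Z <= _).
    move: h1'; rewrite -!mulrA [af n v u Y * _]mulrC [af n v u X * _]mulrC //.
  move: h2'; rewrite -!mulrA.
  by rewrite [af n v u Z * af n v u X]mulrC [af n v u Y * af n v u X]mulrC.
by rewrite ler_pM2r.
Qed.

Lemma psi_id (R : rcfType) n (v : nat -> pt R) u w e Q :
  af n v u (V n v e) * lf n v w (dir n v e) - af n v w (V n v e) * lf n v u (dir n v e) =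
  af n v u Q * lf n v w (dir n v e) - af n v w Q * lf n v u (dir n v e)
  - cross (dir n v u) (dir n v w) * af n v e Q.
Proof.
rewrite /af /lf /cross /psub /=.
case: (dir n v u) => [a1 a2]; case: (dir n v w) => [b1 b2]; case: (dir n v e) => [c1 c2].
case: (V n v u) => [p1 p2]; case: (V n v w) => [q1 q2]; case: (V n v e) => [r1 r2].
case: Q => [z1 z2] /=; ring.
Qed.

Lemma psi_nonneg (R : rcfType) n (v : nat -> pt R) s pu pw k :
  convex_cw_polygon n v -> (pu < pw)%N -> (pw < k)%N -> (k < n)%N ->
  cross (dir n v (s + pu)) (dir n v (s + pw)) < 0 ->
  0 <= af n v (s + pu) (V n v (s + k)) * lf n v (s + pw) (dir n v (s + k))
       - af n v (s + pw) (V n v (s + k)) * lf n v (s + pu) (dir n v (s + k)).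
Proof.
move=> hc h1 h2 h3 huw.
set u := (s + pu)%N; set w := (s + pw)%N; set e := (s + k)%N.
case: (lerP 0 (cross (dir n v u) (dir n v e))) => hue.
  rewrite (@psi_id R n v u w e (V n v u.+1)) af_succ /lf mul0r sub0r.
  have := af_V_ge0 w u.+1 hc; have := af_V_ge0 e u.+1 hc.
  move=> ha hb.
  have := mulr_ge0 hb hue.
  have : 0 <= - cross (dir n v u) (dir n v w) * af n v e (V n v u.+1).
    by apply: mulr_ge0; lra.
  lra.
case: (lerP (cross (dir n v w) (dir n v e)) 0) => hwe.
  rewrite (@psi_id R n v u w e (V n v w)) af_self /lf mul0r subr0.
  have := af_V_ge0 u w hc; have := af_V_ge0 e w hc.
  move=> ha hb.
  have := mulr_ge0 hb (_ : 0 <= - cross (dir n v w) (dir n v e)).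
  have : 0 <= - cross (dir n v u) (dir n v w) * af n v e (V n v w).
    by apply: mulr_ge0; lra.
  move=> h /(_ ltac:(lra)); lra.
have := rho_excl hc h1 h2 h3 hue.
rewrite cross_anti; lra.
Qed.

Lemma Rr_edge (R : rcfType) n (v : nat -> pt R) s pu pw k l1 l2 :
  convex_cw_polygon n v -> (pu < pw)%N -> (pw < k)%N -> (k < n)%N ->
  cross (dir n v (s + pu)) (dir n v (s + pw)) < 0 -> l1 <= l2 ->
  Rr n v (s + pu) (s + pw)
    (padd (V n v (s + k)) (pscale l1 (dir n v (s + k))))
    (padd (V n v (s + k)) (pscale l2 (dir n v (s + k)))).
Proof.
move=> hc h1 h2 h3 huw hl.
have := psi_nonneg hc h1 h2 h3 huw.
rewrite /Rr !af_padd !lf_scale.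
set A := af n v (s + pu) _; set B := lf n v (s + pu) _.
set C := af n v (s + pw) _; set E := lf n v (s + pw) _.
move=> hpsi.
have e : (C + l1 * E) * (A + l2 * B) - (C + l2 * E) * (A + l1 * B) = - ((l2 - l1) * (A * E - C * B)).
  ring.
have : 0 <= (l2 - l1) * (A * E - C * B) by apply: mulr_ge0; lra.
lra.
Qed.

Lemma inP_edge (R : rcfType) n (v : nat -> pt R) e l :
  convex_cw_polygon n v -> 0 <= l -> l <= 1 ->
  inP n v (padd (V n v e) (pscale l (dir n v e))).
Proof.
move=> hc l0 l1; have n0 : (0 < n)%N by have := n3 hc; lia.
by apply: (inP_pconv n0 l0 l1); apply: inP_V.
Qed.

Lemma rho_vertex_pos (R : rcfType) n (v : nat -> pt R) s L pu y :
  convex_cw_polygon n v -> (pu <= L)%N -> (1 <= y)%N -> (L.+1 + y < n)%N ->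
  0 < af n v (s + pu) (V n v (s + (L.+1 + y))).
Proof.
move=> hc h1 h2 h3; apply: conv_pos => //.
  by rewrite mod_shift_neq //; lia.
by rewrite -addnS mod_shift_neq //; lia.
Qed.

Lemma chainV (R : rcfType) n (v : nat -> pt R) s L pu pw d y :
  convex_cw_polygon n v -> (pu < pw)%N -> (pw <= L)%N ->
  cross (dir n v (s + pu)) (dir n v (s + pw)) < 0 ->
  (1 <= y)%N -> (L.+1 + (y + d) < n)%N ->
  Rr n v (s + pu) (s + pw) (V n v (s + (L.+1 + y))) (V n v (s + (L.+1 + (y + d)))).
Proof.
move=> hc h1 h2 huw; have n0 : (0 < n)%N by have := n3 hc; lia.
elim: d => [|d IH] hy hd; first by rewrite addn0; apply: Rr_refl.
apply: (Rr_trans (Y := V n v (s + (L.+1 + (y + d))))).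
- apply: IH => //; lia.
- have e1 : V n v (s + (L.+1 + (y + d))) =
      padd (V n v (s + (L.+1 + (y + d)))) (pscale 0 (dir n v (s + (L.+1 + (y + d))))).
    by rewrite padd_scale0.
  have e2 : V n v (s + (L.+1 + (y + d.+1))) =
      padd (V n v (s + (L.+1 + (y + d)))) (pscale 1 (dir n v (s + (L.+1 + (y + d))))).
    by rewrite pscale1 -Vsucc !addnS.
  rewrite {1}e1 e2; apply: Rr_edge => //; try lia; lra.
- apply: rho_vertex_pos => //; lia.
- exact: inP_af (inP_V _ hc).
- exact: inP_af (inP_V _ hc).
Qed.

Lemma mono_rho (R : rcfType) n (v : nat -> pt R) s L pu pw x1 l1 x2 l2 :
  convex_cw_polygon n v -> (pu < pw)%N -> (pw <= L)%N ->
  cross (dir n v (s + pu)) (dir n v (s + pw)) < 0 ->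
  (L.+1 + x1 < n)%N -> (L.+1 + x2 < n)%N ->
  0 <= l1 -> l1 <= 1 -> 0 <= l2 -> l2 <= 1 ->
  x1%:R + l1 <= x2%:R + l2 ->
  Rr n v (s + pu) (s + pw)
    (padd (V n v (s + (L.+1 + x1))) (pscale l1 (dir n v (s + (L.+1 + x1)))))
    (padd (V n v (s + (L.+1 + x2))) (pscale l2 (dir n v (s + (L.+1 + x2))))).
Proof.
move=> hc h1 h2 huw hx1 hx2 l10 l11 l20 l21 hle.
have n0 : (0 < n)%N by have := n3 hc; lia.
case: (ltngtP x1 x2) => hx.
-
  have ev : forall y, V n v (s + (L.+1 + y.+1)) =
      padd (V n v (s + (L.+1 + y))) (pscale 1 (dir n v (s + (L.+1 + y)))).
    by move=> y; rewrite pscale1 -Vsucc !addnS.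
  have ev0 : forall y, V n v (s + (L.+1 + y)) =
      padd (V n v (s + (L.+1 + y))) (pscale 0 (dir n v (s + (L.+1 + y)))).
    by move=> y; rewrite padd_scale0.
  apply: (Rr_trans (Y := V n v (s + (L.+1 + x1.+1)))).
  + rewrite ev; apply: Rr_edge => //; lia.
  + apply: (Rr_trans (Y := V n v (s + (L.+1 + x2)))).
    * have := chainV (d := (x2 - x1.+1)%N) hc h1 h2 huw (_ : (1 <= x1.+1)%N).
      have -> : (x1.+1 + (x2 - x1.+1) = x2)%N by lia.
      by apply; lia.
    * rewrite {1}ev0; apply: Rr_edge => //; lia.
    * apply: rho_vertex_pos => //; lia.
    * exact: inP_af (inP_V _ hc).
    * exact: inP_af (inP_edge _ hc l20 l21).
  + apply: rho_vertex_pos => //; lia.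
  + exact: inP_af (inP_edge _ hc l10 l11).
  + exact: inP_af (inP_edge _ hc l20 l21).
- (* x2 < x1 : same point *)
  have hx' : (x2.+1 <= x1)%N := hx.
  have hr : (x2.+1)%:R <= x1%:R :> R by rewrite ler_nat.
  rewrite -addn1 natrD in hr.
  have el1 : l1 = 0 by lra.
  have el2 : l2 = 1 by lra.
  have ex : x1 = x2.+1.
    apply/eqP; rewrite eqn_leq hx' andbT -(ler_nat R) -addn1 natrD; lra.
  rewrite el1 el2 ex padd_scale0 pscale1 -Vsucc !addnS; exact: Rr_refl.
- rewrite hx in hle *; apply: Rr_edge => //; try lia; lra.
Qed.


Lemma fmax_pos (R : rcfType) n (v : nat -> pt R) i j Z :
  convex_cw_polygon n v -> inP n v Z ->
  (forall X, inP n v X -> af n v i X * af n v j X <= af n v i Z * af n v j Z) ->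
  0 < af n v i Z /\ 0 < af n v j Z.
Proof.
move=> hc hZ H; have n0 : (0 < n)%N by have := n3 hc; lia.
have [X0 [hX0 [hX0i hX0j]]] := pos_exists i j hc.
have hal0 := inP_af i n0 hZ; have hbe0 := inP_af j n0 hZ.
have hf : 0 < af n v i Z * af n v j Z.
  have := H X0 hX0; have : 0 < af n v i X0 * af n v j X0 by apply: mulr_gt0.
  lra.
split.
  rewrite lt_neqAle hal0 andbT; apply/eqP => e; rewrite -e mul0r in hf; lra.
rewrite lt_neqAle hbe0 andbT; apply/eqP => e; rewrite -e mulr0 in hf; lra.
Qed.

Lemma pt_eq_of_af (R : rcfType) n (v : nat -> pt R) i j Z Z' :
  af n v i Z = af n v i Z' -> af n v j Z = af n v j Z' ->
  cross (dir n v i) (dir n v j) != 0 -> Z = Z'.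
Proof.
rewrite /af /cross /psub.
case: (dir n v i) => [a1 a2]; case: (dir n v j) => [b1 b2].
case: (V n v i) => [p1 p2]; case: (V n v j) => [q1 q2].
case: Z => [z1 z2]; case: Z' => [y1 y2] /= h1 h2 hd.
have e1 : (a1 * b2 - a2 * b1) * (z1 - y1) = 0.
  have -> : (a1 * b2 - a2 * b1) * (z1 - y1) =
    a1 * (- (b1 * (z2 - q2) - b2 * (z1 - q1)) - - (b1 * (y2 - q2) - b2 * (y1 - q1)))
    - b1 * (- (a1 * (z2 - p2) - a2 * (z1 - p1)) - - (a1 * (y2 - p2) - a2 * (y1 - p1))) by ring.
  by rewrite h1 h2 !subrr !mulr0 subrr.
have e2 : (a1 * b2 - a2 * b1) * (z2 - y2) = 0.
  have -> : (a1 * b2 - a2 * b1) * (z2 - y2) =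
    a2 * (- (b1 * (z2 - q2) - b2 * (z1 - q1)) - - (b1 * (y2 - q2) - b2 * (y1 - q1)))
    - b2 * (- (a1 * (z2 - p2) - a2 * (z1 - p1)) - - (a1 * (y2 - p2) - a2 * (y1 - p1))) by ring.
  by rewrite h1 h2 !subrr !mulr0 subrr.
move/eqP: e1; rewrite mulf_eq0 (negbTE hd) /= subr_eq0 => /eqP ->.
move/eqP: e2; rewrite mulf_eq0 (negbTE hd) /= subr_eq0 => /eqP -> //.
Qed.

Lemma uniq_max (R : rcfType) n (v : nat -> pt R) i j Z Z' :
  convex_cw_polygon n v -> inP n v Z -> inP n v Z' ->
  (forall X, inP n v X -> af n v i X * af n v j X <= af n v i Z * af n v j Z) ->
  af n v i Z' * af n v j Z' = af n v i Z * af n v j Z ->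
  cross (dir n v i) (dir n v j) != 0 -> Z' = Z.
Proof.
move=> hc hZ hZ' H heq hd.
have n0 : (0 < n)%N by have := n3 hc; lia.
have [ha hb] := fmax_pos hc hZ H.
have hs := supp n0 hZ H hZ'.
have ha' := inP_af i n0 hZ'; have hb' := inP_af j n0 hZ'.
move: ha hb hs ha' hb' heq.
set a := af n v i Z; set b := af n v j Z; set a' := af n v i Z'; set b' := af n v j Z'.
move=> ha hb hs ha' hb' heq.
have hS : 0 <= a * b' + a' * b by apply: addr_ge0; apply: mulr_ge0; lra.
have hsq : (a * b' - a' * b) ^+ 2 <= 0.
  have -> : (a * b' - a' * b) ^+ 2 = (a * b' + a' * b) ^+ 2 - 4 * (a' * b') * (a * b) by ring.
  rewrite heq.
  have : (a * b' + a' * b) ^+ 2 <= (2 * (a * b)) ^+ 2.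
    rewrite !expr2; apply: ler_pM; lra.
  rewrite !expr2; lra.
have e1 : a * b' = a' * b.
  apply/eqP; rewrite -subr_eq0 -sqrf_eq0; apply/eqP.
  by apply/le_anti; rewrite hsq sqr_ge0.
have e2 : a' = a.
  have h : (a' - a) * ((a' + a) * b) = 0.
    have -> : (a' - a) * ((a' + a) * b) = a' * (a' * b) - a * (a * b) by ring.
    by rewrite -e1 -heq; ring.
  move/eqP: h; rewrite mulf_eq0 => /orP [/eqP h|/eqP h]; first by lra.
  have : 0 < (a' + a) * b by apply: mulr_gt0; lra.
  lra.
have e3 : b' = b.
  rewrite e2 in e1; apply: (mulfI (_ : a != 0)) => //; lra.
exact: (pt_eq_of_af e2 e3 hd).
Qed.

Lemma exchange (R : rcfType) (p q p' q' P Q P' Q' : R) :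
  0 <= p -> 0 <= q -> 0 <= p' -> 0 <= q' -> 0 <= P -> 0 <= Q -> 0 <= P' -> 0 <= Q' ->
  0 < P' * Q' -> p' * q' <= p * q -> P * Q <= P' * Q' ->
  P' * p <= P * p' -> Q' * q <= Q * q' -> p' * q' = p * q.
Proof.
move=> h1 h2 h3 h4 h5 h6 h7 h8 hpos e1 e2 m1 m2.
have h := ler_pM (mulr_ge0 h7 h1) (mulr_ge0 h8 h2) m1 m2.
have e : P * p' * (Q * q') = (P * Q) * (p' * q') by ring.
have e' : P' * p * (Q' * q) = (P' * Q') * (p * q) by ring.
rewrite e e' in h.
have h' : (P * Q) * (p' * q') <= (P' * Q') * (p' * q').
  by apply: ler_wpM2r => //; apply: mulr_ge0.
have : (P' * Q') * (p * q) <= (P' * Q') * (p' * q') by apply: le_trans h'.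
rewrite ler_pM2l // => h''.
by apply/le_anti; rewrite h'' e1.
Qed.


Lemma rho_len_eq (n s t : nat) : (s < n)%N -> (t < n)%N ->
  ((s + n - t.+1) %% n = n.-1 - (t + n - s) %% n)%N.
Proof.
move=> hs ht; case: (leqP s t) => h.
  have -> : (t + n - s = (t - s) + n)%N by lia.
  rewrite modnDr (modn_small (_ : (t - s < n)%N)); last lia.
  rewrite modn_small; lia.
have -> : (s + n - t.+1 = (s - t.+1) + n)%N by lia.
rewrite modnDr (modn_small (_ : (s - t.+1 < n)%N)); last lia.
rewrite modn_small; lia.
Qed.

Lemma to_arc (R : rcfType) n (v : nat -> pt R) s t L x l :
  (s < n)%N -> (t < n)%N -> L = ((t + n - s) %% n)%N ->
  (x < n.-1 - L)%N -> 0 <= l -> l <= 1 ->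
  arc_param n v (rho_start t) (rho_len n s t)
    (padd (V n v (s + (L.+1 + x))) (pscale l (dir n v (s + (L.+1 + x))))) (x%:R + l).
Proof.
move=> hs ht hL hx l0 l1.
have htL : ((s + L) %% n = t)%N by rewrite hL pos_mod.
have e : ((rho_start t + x) %% n = (s + (L.+1 + x)) %% n)%N.
  have -> : (s + (L.+1 + x) = (s + L) + x.+1)%N by lia.
  transitivity ((t + x.+1) %% n)%N; first by rewrite /rho_start addSnnS.
  by rewrite -{1}htL modnDml.
exists x, l; split => //; split => //; split => //; split.
  rewrite /rho_len rho_len_eq // -hL.
  have : (x.+1 <= n.-1 - L)%N := hx.
  rewrite -(ler_nat R) -addn1 natrD; lra.
by rewrite (Veq v e) (direq v e).
Qed.

Lemma af_pos (R : rcfType) n (v : nat -> pt R) s i X :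
  (s < n)%N -> (i < n)%N -> af n v i X = af n v (s + (i + n - s) %% n) X.
Proof. by move=> hs hi; apply: afmod; rewrite pos_mod // modn_small. Qed.

Lemma dir_pos (R : rcfType) n (v : nat -> pt R) s i :
  (s < n)%N -> (i < n)%N -> dir n v i = dir n v (s + (i + n - s) %% n).
Proof. by move=> hs hi; apply: direq; rewrite pos_mod // modn_small. Qed.

Lemma prec_pos (R : rcfType) n (v : nat -> pt R) s t L i j :
  convex_cw_polygon n v -> no_parallel_edges n v -> (s < n)%N -> (L < n)%N ->
  cross (dir n v s) (dir n v (s + L)) < 0 -> L = ((t + n - s) %% n)%N ->
  in_range n s t i -> in_range n s t j -> prec n v i j ->
  (((i + n - s) %% n) < ((j + n - s) %% n))%N.
Proof.
move=> hc hnp hs hLn hsL hL [hi hri] [hj hrj] hp.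
have := prec_cross hc hnp hi hj hp.
rewrite (dir_pos v hs hi) (dir_pos v hs hj).
set pi := ((i + n - s) %% n)%N; set pj := ((j + n - s) %% n)%N.
case: (ltngtP pi pj) => // h.
  have := range_order hc hnp hLn hsL h (_ : (pi <= L)%N).
  by rewrite cross_anti hL; move=> /(_ hri); lra.
by rewrite h cross_self ltxx.
Qed.

Lemma preceq_pos (R : rcfType) n (v : nat -> pt R) s t L i j :
  convex_cw_polygon n v -> no_parallel_edges n v -> (s < n)%N -> (L < n)%N ->
  cross (dir n v s) (dir n v (s + L)) < 0 -> L = ((t + n - s) %% n)%N ->
  in_range n s t i -> in_range n s t j -> preceq n v i j ->
  (((i + n - s) %% n) <= ((j + n - s) %% n))%N.
Proof.
move=> hc hnp hs hLn hsL hL hi hj [->//|hp].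
exact/ltnW/(prec_pos hc hnp hs hLn hsL hL hi hj hp).
Qed.

Lemma isZ_pos (R : rcfType) n (v : nat -> pt R) s i j Z :
  convex_cw_polygon n v -> (s < n)%N -> (i < n)%N -> (j < n)%N -> is_Z n v i j Z ->
  inP n v Z /\ forall X, inP n v X ->
    af n v (s + (i + n - s) %% n) X * af n v (s + (j + n - s) %% n) X <=
    af n v (s + (i + n - s) %% n) Z * af n v (s + (j + n - s) %% n) Z.
Proof.
move=> hc hs hi hj hZ; have [hZ' H] := isZ_max hc hZ; split => // X hX.
by rewrite -!(af_pos _ _ hs hi) -!(af_pos _ _ hs hj); apply: H.
Qed.

Unset Implicit Arguments.
Theorem lemma6 (R : rcfType) (n : nat) (v : nat -> pt R) (s t : nat) :
  convex_cw_polygon n v -> no_parallel_edges n v ->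
  (s < n)%N -> (t < n)%N -> preceq n v s t ->
  (forall i j (Z : pt R), inS n v s t i j -> is_Z n v i j Z -> on_rho n v s t Z) /\
  (forall i j i' j' (Z Z' : pt R),
     inS n v s t i j -> inS n v s t i' j' ->
     preceq n v i i' -> preceq n v j j' ->
     is_Z n v i j Z -> is_Z n v i' j' Z' -> rho_le n v s t Z Z').
Proof.
move=> hc hnp hs ht hst.
have n3' := n3 hc; have n0 : (0 < n)%N by lia.
set L := ((t + n - s) %% n)%N.
have hLn : (L < n)%N by rewrite /L ltn_pmod.
have htL : ((s + L) %% n = t)%N by rewrite /L pos_mod.
case: (eqVneq s t) => [est|nst].
  have hL0 : L = 0%N.
    rewrite /L -est; have -> : (s + n - s = n)%N by lia.
    by rewrite modnn.
  have hsame : forall i, in_range n s t i -> i = s.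
    move=> i [hi hri]; rewrite -/L hL0 leqn0 in hri.
    by have := pos_mod hs hi; rewrite (eqP hri) addn0 modn_small.
  split.
    move=> i j Z [[hij _] [hri hrj]]; exfalso; apply: hij.
    by rewrite (hsame _ hri) (hsame _ hrj).
  move=> i j i' j' Z Z' [[hij _] [hri hrj]]; exfalso; apply: hij.
  by rewrite (hsame _ hri) (hsame _ hrj).
have hst' : prec n v s t by case: hst => // e; rewrite e eqxx in nst.
have hsL : cross (dir n v s) (dir n v (s + L)) < 0.
  rewrite (direq v (_ : ((s + L) %% n = t %% n)%N)); last by rewrite htL modn_small.
  exact: prec_cross hc hnp hs ht hst'.
have hLdef : L = ((t + n - s) %% n)%N by [].
split.
  move=> i j Z [hp [hri hrj]] hZ.
  have hij := prec_pos hc hnp hs hLn hsL hLdef hri hrj hp.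
  case: hri => hi hri; case: hrj => hj hrj.
  have [hZP H] := isZ_pos hc hs hi hj hZ.
  have [x [l [hx [l0 [l1 eZ]]]]] := part1_pos hc hnp hs hLn hsL hij hrj hZP H.
  exists (x%:R + l); rewrite eZ; exact: to_arc.
move=> i j i' j' Z Z' [hp [hri hrj]] [hp' [hri' hrj']] hii hjj hZ hZ'.
have hij := prec_pos hc hnp hs hLn hsL hLdef hri hrj hp.
have hij' := prec_pos hc hnp hs hLn hsL hLdef hri' hrj' hp'.
have hii' := preceq_pos hc hnp hs hLn hsL hLdef hri hri' hii.
have hjj' := preceq_pos hc hnp hs hLn hsL hLdef hrj hrj' hjj.
case: hri => hi hri; case: hrj => hj hrj; case: hri' => hi' hri'; case: hrj' => hj' hrj'.
have [hZP H] := isZ_pos hc hs hi hj hZ.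
have [hZP' H'] := isZ_pos hc hs hi' hj' hZ'.
move: hij hij' hii' hjj' hri hrj hri' hrj' hZP H hZP' H'.
set pi := ((i + n - s) %% n)%N; set pj := ((j + n - s) %% n)%N.
set pi' := ((i' + n - s) %% n)%N; set pj' := ((j' + n - s) %% n)%N.
move=> hij hij' hii' hjj' hri hrj hri' hrj' hZP H hZP' H'.
have [x [l [hx [l0 [l1 eZ]]]]] := part1_pos hc hnp hs hLn hsL hij hrj hZP H.
have [x' [l' [hx' [l0' [l1' eZ']]]]] := part1_pos hc hnp hs hLn hsL hij' hrj' hZP' H'.
case: (lerP (x%:R + l) (x'%:R + l')) => hle.
  exists (x%:R + l), (x'%:R + l'); split; first by rewrite eZ; exact: to_arc.
  by split => //; rewrite eZ'; exact: to_arc.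
have hxn : (L.+1 + x < n)%N by clear -hx n3'; lia.
have hxn' : (L.+1 + x' < n)%N by clear -hx' n3'; lia.
have M1 : af n v (s + pi') Z' * af n v (s + pi) Z <= af n v (s + pi') Z * af n v (s + pi) Z'.
  case: (ltngtP pi pi') => hc1; last by rewrite hc1 mulrC.
    rewrite eZ eZ'; apply: mono_rho => //; try lra.
    by apply: (range_order hc hnp hLn hsL hc1).
  by exfalso; clear -hc1 hii' hjj'; lia.
have M2 : af n v (s + pj') Z' * af n v (s + pj) Z <= af n v (s + pj') Z * af n v (s + pj) Z'.
  case: (ltngtP pj pj') => hc1; last by rewrite hc1 mulrC.
    rewrite eZ eZ'; apply: mono_rho => //; try lra.
    by apply: (range_order hc hnp hLn hsL hc1).
  by exfalso; clear -hc1 hii' hjj'; lia.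
have [hp1 hp2] := fmax_pos hc hZP' H'.
have heq := exchange (inP_af _ n0 hZP) (inP_af _ n0 hZP) (inP_af _ n0 hZP')
  (inP_af _ n0 hZP') (inP_af _ n0 hZP) (inP_af _ n0 hZP) (inP_af _ n0 hZP')
  (inP_af _ n0 hZP') (mulr_gt0 hp1 hp2) (H _ hZP') (H' _ hZP) M1 M2.
have hd : cross (dir n v (s + pi)) (dir n v (s + pj)) != 0.
  by have := range_order hc hnp hLn hsL hij hrj; rewrite lt_neqAle => /andP [].
have eZZ := uniq_max hc hZP hZP' H heq hd.
exists (x'%:R + l'), (x'%:R + l'); rewrite -eZZ eZ'.
by split; first exact: to_arc; split; first exact: to_arc.
Qed.
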